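(* Let $H$ be a real Hilbert space, let $D\subseteq H$ be a nonempty closed convex set, and let $C_1,\dots,C_m\subseteq D$ be closed convex sets with $C:=\bigcap_{i=1}^m C_i\neq\emptyset$. Let $P_i:=P_{C_i}:D\to C_i$ be the metric projection onto $C_i$. Fix $(\Omega,w)\in\mathcal{M}$, let $(\lambda_k)_{k\in\mathbb{N}}$ be a steering sequence, and let $u,x^0\in D$. For an index vector $t=(t_1,\dots,t_q)$ let $P[t]:=P_{t_q}P_{t_{q-1}}\cdots P_{t_1}$. Then the sequence defined by $$x^{k+1}=\lambda_k u+(1-\lambda_k)\sum_{t\in\Omega}w(t)P[t](x^k),\quad k\ge0,$$ converges strongly to $P_C(u)$.
   Context: An index vector is a finite tuple $t=(t_1,\dots,t_q)$ with each $t_\ell\in\{1,\dots,m\}$. A finite set $\Omega$ of index vectors is fit if every $i\in\{1,\dots,m\}$ appears as a component of some $t\in\Omega$. $\mathcal{M}$ denotes the collection of all pairs $(\Omega,w)$ where $\Omega$ is a fit finite set of index vectors and $w:\Omega\to(0,1]$ satisfies $\sum_{t\in\Omega}w(t)=1$. A steering sequence is a real sequence $(\lambda_k)_{k\in\mathbb{N}}$ with $\lambda_k\in[0,1]$ for all $k$, $\lim_{k\to\infty}\lambda_k=0$, $\sum_{k=0}^\infty\lambda_k=+\infty$, and $\sum_{k=0}^\infty|\lambda_{k+1}-\lambda_k|<\infty$. *)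

(* Defs.v *)
From HB Require Import structures.
From mathcomp Require Import all_boot all_order all_algebra.
From mathcomp Require Import finmap.
From mathcomp Require Import all_classical all_reals all_analysis.
Set Implicit Arguments. Unset Strict Implicit. Unset Printing Implicit Defensive.
Import Order.TTheory GRing.Theory Num.Theory.
Import numFieldNormedType.Exports.
Local Open Scope classical_set_scope.
Local Open Scope ring_scope.

Definition hilbert_inner (R : realType) (H : completeNormedModType R)
  (ip : H -> H -> R) : Prop :=
  [/\ forall x y : H, ip x y = ip y x,
      forall (a : R) (x y z : H), ip (a *: x + y) z = a * ip x z + ip y z
    & forall x : H, ip x x = `|x| ^+ 2].

Definition is_metric_proj (R : realType) (H : normedModType R) (S : set H)
  (x p : H) : Prop :=
  S p /\ forall y : H, S y -> `|x - p| <= `|x - y|.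

(* index vectors over {1..m} (0-based here: 'I_m), of length q >= 1 *)
Definition index_vector (m : nat) (t : seq 'I_m) : bool := (0 < size t)%N.

Definition fit (m : nat) (Omega : {fset (seq 'I_m)}) : Prop :=
  (forall t, t \in Omega -> index_vector t) /\
  (forall i : 'I_m, exists2 t, t \in Omega & i \in t).

Definition in_M (R : realType) (m : nat) (Omega : {fset (seq 'I_m)})
  (w : seq 'I_m -> R) : Prop :=
  [/\ fit Omega, forall t, t \in Omega -> 0 < w t <= 1
    & \sum_(t <- Omega) w t = 1].

Definition steering (R : realType) (lam : nat -> R) : Prop :=
  [/\ forall k, 0 <= lam k <= 1,
      lam @ \oo --> 0,
      (series lam) @ \oo --> +oo
    & cvg ((series (fun k => `|lam k.+1 - lam k|)) @ \oo)].

(* P[t] = P_{t_q} ... P_{t_1} : apply P_{t_1} first *)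
Definition Pt (m : nat) (H : Type) (P : 'I_m -> H -> H) (t : seq 'I_m) (x : H) : H :=
  foldl (fun y i => P i y) x t.

(* Main.v *)
Require Import Defs.
From HB Require Import structures.
From mathcomp Require Import all_boot all_order all_algebra.
From mathcomp Require Import finmap.
From mathcomp Require Import all_classical all_reals all_analysis.
From mathcomp Require Import ring lra.
Import Order.TTheory GRing.Theory Num.Theory.
Import numFieldNormedType.Exports.
Local Open Scope classical_set_scope.
Local Open Scope ring_scope.
Set Implicit Arguments. Unset Strict Implicit. Unset Printing Implicit Defensive.
Lemma le_sq (R : realType) (a b : R) : 0 <= a -> a <= b -> a ^+ 2 <= b ^+ 2.
Proof. move=> a0 ab; rewrite !expr2; nra. Qed.

Lemma sq_le_norm (R : realType) (a b : R) : 0 <= a -> 0 <= b -> a ^+ 2 <= b ^+ 2 -> a <= b.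
Proof. move=> a0 b0; rewrite !expr2 => h; nra. Qed.
Lemma le0_of_forall (R : realType) (x : R) : (forall e, 0 < e -> x <= e) -> x <= 0.
Proof.
move=> h; rewrite leNgt; apply/negP => x0.
have := h (x / 2); rewrite divr_gt0 // => /(_ isT); lra.
Qed.

Lemma le_of_forall (R : realType) (a b : R) : (forall e, 0 < e -> a <= b + e) -> a <= b.
Proof.
move=> h; rewrite -subr_le0; apply: le0_of_forall => e e0; have := h e e0; lra.
Qed.

Lemma exists_small (R : realType) (K e : R) : 0 <= K -> 0 < e ->
  exists n : nat, forall m, (n <= m)%N -> K * (m.+1%:R)^-1 <= e.
Proof.
move=> K0 e0; have := archi_boundP (divr_ge0 K0 (ltW e0)).
set n := Num.Def.archi_bound _ => hn; exists n => m nm.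
rewrite ler_pdivrMr ?ltr0Sn // -ler_pdivrMl //.
rewrite mulrC; apply: (le_trans (ltW hn)); rewrite ler_nat; apply: leq_trans nm _; exact: leqnSn.
Qed.
Section IP.
Context (R : realType) (H : completeNormedModType R) (ip : H -> H -> R)
  (hI : hilbert_inner ip).

Lemma ipC x y : ip x y = ip y x. Proof. by case: hI. Qed.
Lemma ipxx x : ip x x = `|x| ^+ 2. Proof. by case: hI. Qed.
Lemma ip_lin a x y z : ip (a *: x + y) z = a * ip x z + ip y z.
Proof. by case: hI. Qed.
Lemma ipDl x y z : ip (x + y) z = ip x z + ip y z.
Proof. by have := ip_lin 1 x y z; rewrite scale1r mul1r. Qed.
Lemma ip0l z : ip 0 z = 0.
Proof. by have := ipDl 0 0 z; rewrite addr0; lra. Qed.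
Lemma ipZl a x z : ip (a *: x) z = a * ip x z.
Proof. by rewrite -[a *: x]addr0 ip_lin ip0l addr0. Qed.
Lemma ipNl x z : ip (- x) z = - ip x z.
Proof. by rewrite -scaleN1r ipZl mulN1r. Qed.
Lemma ipBl x y z : ip (x - y) z = ip x z - ip y z.
Proof. by rewrite ipDl ipNl. Qed.
Lemma ipDr x y z : ip z (x + y) = ip z x + ip z y.
Proof. by rewrite ipC ipDl ![ip _ z]ipC. Qed.
Lemma ipZr a x z : ip z (a *: x) = a * ip z x.
Proof. by rewrite ipC ipZl ipC. Qed.
Lemma ipNr x z : ip z (- x) = - ip z x.
Proof. by rewrite ipC ipNl ipC. Qed.
Lemma ipBr x y z : ip z (x - y) = ip z x - ip z y.
Proof. by rewrite ipDr ipNr. Qed.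

Lemma normD2 x y : `|x + y| ^+ 2 = `|x| ^+ 2 + 2 * ip x y + `|y| ^+ 2.
Proof. by rewrite -!ipxx ipDl !ipDr [ip y x]ipC; ring. Qed.
Lemma normB2 x y : `|x - y| ^+ 2 = `|x| ^+ 2 - 2 * ip x y + `|y| ^+ 2.
Proof. by rewrite normD2 ipNr normrN; ring. Qed.

Lemma ip_le x y : ip x y <= `|x| * `|y|.
Proof.
have h := ler_normD x y.
have h2 : `|x + y| ^+ 2 <= (`|x| + `|y|) ^+ 2.
  by rewrite lerXn2r // ?nnegrE ?addr_ge0.
rewrite normD2 in h2.
have : 2 * ip x y <= 2 * (`|x| * `|y|) by nra.
by rewrite ler_pM2l.
Qed.

Lemma ip_le' x y : - ip x y <= `|x| * `|y|.
Proof. by rewrite -ipNl -(normrN x) ip_le. Qed.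

End IP.
Section Conv.
Context (R : realType) (H : completeNormedModType R).
Lemma convexP (D : set H) x y (s : R) : convex_set D -> D x -> D y ->
  0 <= s -> s <= 1 -> D (s *: x + (1 - s) *: y).
Proof.
move=> cD Dx Dy s0 s1.
have := cD x y (Itv01 s0 s1) (mem_set Dx) (mem_set Dy).
by rewrite inE.
Qed.
End Conv.
Section Proj.
Context (R : realType) (H : completeNormedModType R) (ip : H -> H -> R)
  (hI : hilbert_inner ip).

Lemma proj_vi (S : set H) y p c : convex_set S -> is_metric_proj S y p -> S c ->
  ip (y - p) (c - p) <= 0.
Proof.
move=> cS [Sp hp] Sc.
set a := ip (y - p) (c - p); set K := `|c - p| ^+ 2.
have K0 : 0 <= K by rewrite /K exprn_ge0.
have key : forall s, 0 < s -> s <= 1 -> 2 * a <= s * K.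
  move=> s s0 s1; have S' := convexP cS Sc Sp (ltW s0) s1.
  have := hp _ S'.
  have -> : y - (s *: c + (1 - s) *: p) = (y - p) - s *: (c - p).
    by rewrite scalerBr scalerBl scale1r opprD !opprB addrA [in RHS]addrC [in RHS](addrC (s *: p)) !addrA [_ + _ + y]addrC addrA.
  move/(le_sq (normr_ge0 _)); rewrite [X in _ <= X](normB2 hI) (ipZr hI) normrZ gtr0_norm // exprMn -/a -/K.
  move=> h; nra.
have [a0|a0] := leP a 0 => //.
have Ka : 0 < K + a by lra.
set s := a / (K + a).
have s0 : 0 < s by rewrite /s divr_gt0.
have sKa : s * (K + a) = a by rewrite /s mulfVK // gt_eqF.
have s1 : s <= 1 by nra.
have := key s s0 s1; nra.
Qed.

Lemma proj_nonexp (S : set H) x y p q : convex_set S ->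
  is_metric_proj S x p -> is_metric_proj S y q -> `|p - q| <= `|x - y|.
Proof.
move=> cS hp hq.
have h1 := proj_vi cS hp hq.1.
have h2 := proj_vi cS hq hp.1.
have e : ip (x - y) (p - q) >= `|p - q| ^+ 2.
  move: h1 h2; rewrite -(ipxx hI) !(ipBl hI) !(ipBr hI) ![ip q p](ipC hI); lra.
have := ip_le hI (x - y) (p - q).
have := normr_ge0 (p - q); have := normr_ge0 (x - y). nra.
Qed.

Lemma proj_quasi (S : set H) y p c : convex_set S -> is_metric_proj S y p -> S c ->
  `|y - p| ^+ 2 + `|p - c| ^+ 2 <= `|y - c| ^+ 2.
Proof.
move=> cS hp Sc; have h := proj_vi cS hp Sc.
have -> : y - c = (y - p) - (c - p) by rewrite opprB addrA subrK.
rewrite [in leRHS](normB2 hI) -(normrN (p - c)) opprB; lra.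
Qed.

Lemma proj_fix (S : set H) y p : is_metric_proj S y p -> S y -> p = y.
Proof.
move=> [Sp hp] Sy; have := hp _ Sy; rewrite subrr normr0.
by move=> h; apply/eqP; rewrite eq_sym -subr_eq0 -normr_eq0 eq_le h normr_ge0.
Qed.

End Proj.

Section Conv2.
Context (R : realType) (H : completeNormedModType R).

Lemma conv_sum (D : set H) (I : eqType) (s : seq I) (w : I -> R) (v : I -> H) :
  convex_set D -> D !=set0 ->
  (forall t, t \in s -> 0 <= w t) -> (forall t, t \in s -> D (v t)) ->
  exists d, D d /\ \sum_(t <- s) w t *: v t = (\sum_(t <- s) w t) *: d.
Proof.
move=> cD [d0 Dd0]; elim: s => [|a s IH] hw hv.
  by exists d0; split => //; rewrite !big_nil scale0r.
have [d' [Dd' e']] : exists d, D d /\ \sum_(t <- s) w t *: v t = (\sum_(t <- s) w t) *: d.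
  by apply: IH => t ts; [apply: hw | apply: hv]; rewrite inE ts orbT.
have wa : 0 <= w a by apply: hw; rewrite inE eqxx.
have Dva : D (v a) by apply: hv; rewrite inE eqxx.
have W0 : 0 <= \sum_(t <- s) w t.
  by rewrite big_seq; apply: sumr_ge0 => t ts; apply: hw; rewrite inE ts orbT.
rewrite !big_cons e'.
set W := \sum_(t <- s) w t in W0 e' *.
have [S0|S0] := eqVneq (w a + W) 0.
  have wa0 : w a = 0 by lra.
  have W00 : W = 0 by lra.
  by exists d'; rewrite S0 wa0 W00 !scale0r addr0.
have Sp : 0 < w a + W by rewrite lt_neqAle eq_sym S0 addr_ge0.
set al := w a / (w a + W).
have al0 : 0 <= al by rewrite /al divr_ge0 // ltW.
have alS : al * (w a + W) = w a by rewrite /al mulfVK.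
have al1 : al <= 1 by nra.
exists (al *: v a + (1 - al) *: d'); split; first exact: convexP.
rewrite scalerDr !scalerA [(w a + W) * al]mulrC alS.
congr (_ + _); congr (_ *: _); nra.
Qed.
End Conv2.

Section PtT.
Context (R : realType) (H : completeNormedModType R) (ip : H -> H -> R)
  (hI : hilbert_inner ip) (D : set H) (m : nat) (C : 'I_m -> set H)
  (P : 'I_m -> H -> H)
  (hC : forall i, closed (C i) /\ convex_set (C i) /\ C i `<=` D)
  (hP : forall i y, D y -> is_metric_proj (C i) y (P i y)).

Lemma PiD i y : D y -> D (P i y).
Proof. by move=> Dy; exact: (hC i).2.2 _ (hP i Dy).1. Qed.

Lemma Pt_D t y : D y -> D (Pt P t y).
Proof. by elim: t y => //= i t IH y Dy; apply: IH; apply: PiD. Qed.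

Lemma Pt_nonexp t x y : D x -> D y -> `|Pt P t x - Pt P t y| <= `|x - y|.
Proof.
elim: t x y => //= i t IH x y Dx Dy.
apply: le_trans (IH _ _ (PiD i Dx) (PiD i Dy)) _.
exact: (proj_nonexp hI (hC i).2.1 (hP i Dx) (hP i Dy)).
Qed.

Lemma Pt_quasi t y p : (forall i, C i p) -> D y ->
  `|Pt P t y - p| <= `|y - p| /\
  (`|y - p| <= `|Pt P t y - p| -> forall i, i \in t -> C i y).
Proof.
move=> Cp; elim: t y => [|i t IH] y Dy /=; first by split.
have q := proj_quasi hI (hC i).2.1 (hP i Dy) (Cp i).
have [h1 h2] := IH _ (PiD i Dy).
have le1 : `|P i y - p| <= `|y - p|.
  apply: sq_le_norm => //; have := sqr_ge0 `|y - P i y|; lra.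
split; first exact: le_trans h1 le1.
move=> hge j; rewrite inE => /orP [/eqP->|jt].
  have e : `|y - P i y| ^+ 2 <= 0.
    have : `|y - p| <= `|P i y - p| by apply: le_trans hge h1.
    move/(le_sq (normr_ge0 _)); lra.
  have : `|y - P i y| = 0 by have := sqr_ge0 `|y - P i y|; nra.
  move/eqP; rewrite normr_eq0 subr_eq0 => /eqP ->.
  exact: (hP i Dy).1.
have e : `|y - P i y| ^+ 2 <= 0.
  have : `|y - p| <= `|P i y - p| by apply: le_trans hge h1.
  move/(le_sq (normr_ge0 _)); lra.
have : `|y - P i y| = 0 by have := sqr_ge0 `|y - P i y|; nra.
move/eqP; rewrite normr_eq0 subr_eq0 => /eqP ey.
rewrite ey; apply: h2 => //; by rewrite {1}ey in hge.
Qed.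

Lemma Pt_fixC t y : (forall i, C i y) -> Pt P t y = y.
Proof.
move=> Cy; elim: t => //= i t IH.
have -> : P i y = y by apply: proj_fix (@hP i y _) (Cy i); apply: (hC i).2.2.
exact: IH.
Qed.

End PtT.
Definition Tm (R : realType) (H : completeNormedModType R) (m : nat)
  (P : 'I_m -> H -> H) (s : seq (seq 'I_m)) (w : seq 'I_m -> R) (y : H) : H :=
  \sum_(t <- s) w t *: Pt P t y.

Lemma sum_nonneg_le0 (R : realType) (I : eqType) (s : seq I) (f : I -> R) :
  (forall t, t \in s -> 0 <= f t) -> \sum_(t <- s) f t <= 0 ->
  forall t, t \in s -> f t = 0.
Proof.
move=> h0 hs t ts.
have := hs; rewrite (big_rem t ts) /=.
have : 0 <= \sum_(y <- rem t s) f y.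
  rewrite big_seq; apply: sumr_ge0 => y ys; apply: h0.
  exact: (mem_rem ys).
have := h0 t ts; lra.
Qed.

Section TT.
Context (R : realType) (H : completeNormedModType R) (ip : H -> H -> R)
  (hI : hilbert_inner ip) (D : set H) (m : nat) (C : 'I_m -> set H)
  (P : 'I_m -> H -> H)
  (hC : forall i, closed (C i) /\ convex_set (C i) /\ C i `<=` D)
  (hP : forall i y, D y -> is_metric_proj (C i) y (P i y))
  (s : seq (seq 'I_m)) (w : seq 'I_m -> R)
  (hw : forall t, t \in s -> 0 < w t) (hs : \sum_(t <- s) w t = 1).

Local Notation T := (Tm P s w).

Lemma T_D (cD : convex_set D) (nD : D !=set0) y : D y -> D (T y).
Proof.
move=> Dy; have [d [Dd e]] := conv_sum cD nD (fun t ts => ltW (hw ts))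
  (fun t _ => Pt_D hC hP t Dy).
by rewrite /Tm e hs scale1r.
Qed.

Lemma T_nonexp x y : D x -> D y -> `|T x - T y| <= `|x - y|.
Proof.
move=> Dx Dy; rewrite /Tm -sumrB.
apply: le_trans (ler_norm_sum _ _ _) _.
rewrite -[X in _ <= X]mul1r -hs mulr_suml big_seq [X in _ <= X]big_seq.
apply: ler_sum => t ts; rewrite -scalerBr normrZ gtr0_norm ?hw //.
by rewrite ler_pM2l ?hw // (Pt_nonexp hI hC hP).
Qed.

Lemma T_of_C y : (forall i, C i y) -> T y = y.
Proof.
move=> Cy; rewrite /Tm.
under eq_bigr do rewrite (Pt_fixC hC hP _ Cy).
by rewrite -scaler_suml hs scale1r.
Qed.

Lemma T_fix (hfit : forall i : 'I_m, exists2 t, t \in s & i \in t)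
  (Cne : exists p, forall i, C i p) y : D y -> T y = y -> forall i, C i y.
Proof.
move=> Dy Ty; have [p Cp] := Cne.
have e1 : `|y - p| <= \sum_(t <- s) w t * `|Pt P t y - p|.
  have -> : y - p = \sum_(t <- s) w t *: (Pt P t y - p).
    by under eq_bigr do rewrite scalerBr; rewrite sumrB -scaler_suml hs scale1r -/(Tm P s w y) Ty.
  apply: le_trans (ler_norm_sum _ _ _) _.
  rewrite big_seq [X in _ <= X]big_seq; apply: ler_sum => t ts.
  by rewrite normrZ gtr0_norm ?hw.
have h0 : forall t, t \in s -> 0 <= w t * (`|y - p| - `|Pt P t y - p|).
  move=> t ts; rewrite mulr_ge0 ?subr_ge0 ?(ltW (hw ts)) //.
  exact: (Pt_quasi hI hC hP t Cp Dy).1.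
have hle : \sum_(t <- s) w t * (`|y - p| - `|Pt P t y - p|) <= 0.
  under eq_bigr do rewrite mulrBr.
  rewrite sumrB -mulr_suml hs mul1r; lra.
have z := sum_nonneg_le0 h0 hle.
move=> i; have [t ts it] := hfit i.
apply: (Pt_quasi hI hC hP t Cp Dy).2 => //.
have := z t ts; move/eqP; rewrite mulf_eq0 (gt_eqF (hw ts)) /= subr_eq0 => /eqP ->.
by [].
Qed.

End TT.
Lemma xu3 (R : realType) (a g d b : nat -> R) :
  (forall k, 0 <= g k <= 1) -> (forall k, 0 <= b k) ->
  (forall N B, exists K, forall k, (K <= k)%N -> B <= \sum_(N <= j < k) g j) ->
  (forall e, 0 < e -> exists N, forall N' K, (N <= N')%N -> (N' <= K)%N ->
      \sum_(N' <= j < K) b j <= e) ->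
  (forall e, 0 < e -> exists N, forall k, (N <= k)%N -> d k <= e) ->
  (forall k, a k.+1 <= (1 - g k) * a k + g k * d k + b k) ->
  forall e, 0 < e -> exists N, forall k, (N <= k)%N -> a k <= 3 * e.
Proof.
move=> hg hb hdiv hbeta hd hrec e e0.
have [N1 hN1] := hd e e0; have [N2 hN2] := hbeta e e0.
set N := maxn N1 N2.
pose B k := \sum_(N <= j < k) b j.
pose c k := Num.max (a k - e - B k) 0.
have B0 k : 0 <= B k by apply: sumr_ge0 => j _; exact: hb.
have Ble k : (N <= k)%N -> B k <= e by move=> Nk; apply: hN2 => //; exact: leq_maxr.
have c0 k : 0 <= c k by rewrite le_max lexx orbT.
have cge k : a k - e - B k <= c k by rewrite le_max lexx.
have cstep k : (N <= k)%N -> c k.+1 <= (1 - g k) * c k.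
  move=> Nk.
  have Bs : B k.+1 = B k + b k by rewrite /B big_nat_recr.
  have dk : d k <= e by apply: hN1; apply: leq_trans Nk; exact: leq_maxl.
  have := hrec k; have := hg k; have := B0 k; have := cge k; have := c0 k.
  move=> ? ? ? /andP[? ?] ?.
  rewrite ge_max; apply/andP; split; last by rewrite mulr_ge0 // subr_ge0.
  rewrite Bs; nra.
have cprod n : c (N + n)%N * (1 + \sum_(N <= j < (N + n)%N) g j) <= c N.
  elim: n => [|n IH]; first by rewrite addn0 big_geq // addr0 mulr1.
  rewrite addnS big_nat_recr ?leq_addr //.
  set S := \sum_(N <= j < (N + n)%N) g j in IH *.
  have S0 : 0 <= S by apply: sumr_ge0 => j _; have := hg j; case/andP.
  have := cstep (N + n)%N (leq_addr _ _); have := c0 (N + n)%N; have := c0 (N + n).+1.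
  have := hg (N + n)%N; case/andP => g0 g1 h1 h2 h3.
  apply: le_trans IH.
  set cc := c (N + n)%N in h1 h2 h3 *; set c' := c (N + n).+1 in h1 h2 h3 *.
  set gg := g (N + n)%N in g0 g1 h3 *.
  have t1 : c' * (1 + (S + gg)) <= (1 - gg) * cc * (1 + (S + gg)).
    by apply: ler_wpM2r => //; lra.
  apply: le_trans t1 _.
  have t2 : (1 - gg) * (1 + (S + gg)) <= 1 + S by nra.
  nra.
have [K hK] := hdiv N (c N / e).
exists (maxn K N) => k hk.
have Kk : (K <= k)%N by apply: leq_trans hk; exact: leq_maxl.
have Nk : (N <= k)%N by apply: leq_trans hk; exact: leq_maxr.
have := cprod (k - N)%N; rewrite subnKC //.
have := hK k Kk.
have ce : c N / e * e = c N by rewrite mulfVK // gt_eqF.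
have := c0 k; have := c0 N; have := cge k; have := Ble k Nk; have := B0 k.
move=> ? ? ? ? ? h1 h2.
have ck : c k <= e.
  rewrite leNgt; apply/negP => hlt.
  have : c k * (1 + c N / e) <= c N.
    apply: le_trans h2; apply: ler_wpM2l => //; lra.
  have : 0 <= c N / e by rewrite divr_ge0 // ltW.
  nra.
lra.
Qed.

Lemma xu (R : realType) (a g d b : nat -> R) :
  (forall k, 0 <= g k <= 1) -> (forall k, 0 <= b k) ->
  (forall N B, exists K, forall k, (K <= k)%N -> B <= \sum_(N <= j < k) g j) ->
  (forall e, 0 < e -> exists N, forall N' K, (N <= N')%N -> (N' <= K)%N ->
      \sum_(N' <= j < K) b j <= e) ->
  (forall e, 0 < e -> exists N, forall k, (N <= k)%N -> d k <= e) ->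
  (forall k, a k.+1 <= (1 - g k) * a k + g k * d k + b k) ->
  forall e, 0 < e -> exists N, forall k, (N <= k)%N -> a k <= e.
Proof.
move=> hg hb hdiv hbeta hd hrec e e0.
have e3 : 0 < e / 3 by rewrite divr_gt0.
have [N hN] := xu3 hg hb hdiv hbeta hd hrec e3.
exists N => k /hN; rewrite mulrC divfK //; lra.
Qed.
Lemma near_oo (P : nat -> Prop) :
  (\forall n \near \oo, P n) -> exists N, forall n, (N <= n)%N -> P n.
Proof. by case=> N _ hN; exists N => n Nn; exact: hN. Qed.

Lemma oo_near (P : nat -> Prop) :
  (exists N, forall n, (N <= n)%N -> P n) -> \forall n \near \oo, P n.
Proof. by case=> N hN; exists N. Qed.

Lemma cvg_eps (R : realType) (H : normedModType R) (z : nat -> H) (l : H) :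
  z @ \oo --> l -> forall e, 0 < e -> exists N, forall n, (N <= n)%N -> `|l - z n| <= e.
Proof. by move=> /cvgrPdist_le h e e0; apply: near_oo; apply: h. Qed.

Lemma eps_cvg (R : realType) (H : normedModType R) (z : nat -> H) (l : H) :
  (forall e, 0 < e -> exists N, forall n, (N <= n)%N -> `|l - z n| <= e) -> z @ \oo --> l.
Proof. by move=> h; apply/cvgrPdist_le => e e0; apply: oo_near; apply: h. Qed.

Lemma cauchy_seq (R : realType) (H : completeNormedModType R) (z : nat -> H) :
  (forall e, 0 < e -> exists N, forall n m, (N <= n)%N -> (N <= m)%N -> `|z n - z m| <= e) ->
  cvgn z.
Proof.
move=> hc; apply/cauchy_cvgP; apply/cauchy_ballP => _/posnumP[e]; near_simpl.
have e2 : 0 < e%:num / 2 by rewrite divr_gt0.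
have [N hN] := hc _ e2.
exists ([set n | (N <= n)%N], [set n | (N <= n)%N]); first by split; exists N.
move=> [n m] [/= Nn Nm]; rewrite -ball_normE /=.
apply: le_lt_trans (hN _ _ Nn Nm) _; rewrite ltr_pdivrMr //; lra.
Qed.
Lemma convB (R : realType) (H : completeNormedModType R) (a b p : H) (s : R) :
  s *: a + (1 - s) *: b - p = s *: (a - p) + (1 - s) *: (b - p).
Proof.
rewrite !scalerBr addrACA -opprD -scalerDl [s + _]addrC subrK scale1r.
by [].
Qed.

Lemma convD (R : realType) (H : completeNormedModType R) (a b c : H) (s t : R) :
  (s *: a + (1 - s) *: b) - (t *: a + (1 - t) *: c) =
  (s - t) *: (a - c) + (1 - s) *: (b - c).
Proof.
rewrite !scalerBr !scalerBl !scale1r.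
rewrite opprD !opprB [RHS]addrACA subrKA addrA.
by rewrite [s *: a + _ - _]addrAC.
Qed.

Lemma div_tail (R : realType) (f : nat -> R) (s : nat) :
  series f @ \oo --> +oo ->
  forall N B, exists K, forall k, (K <= k)%N -> B <= \sum_(N <= j < k) f (j + s)%N.
Proof.
move=> /cvgryPge hf N B.
have [K1 hK1] := near_oo (hf (B + series f (N + s)%N)).
exists (maxn K1 N) => k hk.
have Nk : (N <= k)%N by apply: leq_trans hk; exact: leq_maxr.
have : (N + s <= k + s)%N by rewrite leq_add2r.
move/sub_series_geq => e.
have e2 : \sum_(N <= j < k) f (j + s)%N = \sum_((N + s)%N <= j < (k + s)%N) f j.
  by rewrite big_addn addnK.
rewrite e2 -(e _ f).
have := hK1 (k + s)%N (leq_trans (leq_trans (leq_maxl _ _) hk) (leq_addr _ _)).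
lra.
Qed.

Lemma tail_small (R : realType) (c : nat -> R) :
  (forall j, 0 <= c j) -> cvgn (series c) ->
  forall e, 0 < e -> exists N, forall N' K, (N <= N')%N -> (N' <= K)%N ->
    \sum_(N' <= j < K) c j <= e.
Proof.
move=> c0 hc e e0.
have mono : {homo series c : n m / (n <= m)%N >-> n <= m}.
  move=> n m nm; rewrite -subr_ge0 sub_series_geq //.
  by apply: sumr_ge0 => j _.
have le := nondecreasing_cvgn_le mono hc.
have [N hN] := cvg_eps hc e0.
exists N => N' K NN' N'K.
rewrite -sub_series_geq //.
have := hN N' NN'; have := le K; have := ler_norm (limn (series c) - series c N').
lra.
Qed.
Section Halpern.
Context (R : realType) (H : completeNormedModType R) (ip : H -> H -> R)
  (hI : hilbert_inner ip) (D : set H) (T : H -> H)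
  (cD : convex_set D) (clD : closed D)
  (TD : forall y, D y -> D (T y))
  (Tne : forall x y, D x -> D y -> `|T x - T y| <= `|x - y|)
  (p0 : H) (Dp0 : D p0) (Tp0 : T p0 = p0) (u : H) (Du : D u).

Lemma monoT x y : D x -> D y -> 0 <= ip ((x - T x) - (y - T y)) (x - y).
Proof.
move=> Dx Dy.
have -> : (x - T x) - (y - T y) = (x - y) - (T x - T y).
  by rewrite !opprD !opprK addrACA.
rewrite (ipBl hI) (ipxx hI).
have := ip_le hI (T x - T y) (x - y); have := Tne Dx Dy.
have := normr_ge0 (x - y); have := normr_ge0 (T x - T y); nra.
Qed.

Lemma browder (e : R) : 0 < e -> exists2 z, D z & z - T z = e *: (u - z).
Proof.
move=> e0.
set q := (1 + e)^-1.
have q0 : 0 < q by rewrite invr_gt0; lra.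
have q1 : q < 1 by rewrite invf_lt1; lra.
pose f y := q *: T y + (1 - q) *: u.
have fD : {homo f : y / D y >-> D y}.
  by move=> y Dy; apply: convexP; [exact: cD|exact: TD|exact: Du|exact: ltW|exact: ltW].
have ctr : is_contraction (mkfun_fun fD).
  exists (NngNum (ltW q0)); split => //=.
  move=> [a b] [/= Da Db].
  rewrite /mkfun /f opprD addrACA subrr addr0 -scalerBr normrZ gtr0_norm //.
  by apply: ler_wpM2l; [exact: ltW | exact: Tne].
have [z Dz zf] := banach_fixed_point ctr clD (ex_intro _ u Du).
exists z => //.
have ez : z = q *: T z + (1 - q) *: u by exact: zf.
have ez' : (1 - q) *: u = z - q *: T z by rewrite {1}ez addrAC subrr add0r.
have e1 : q *: (z - T z) = (1 - q) *: (u - z).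
  rewrite !scalerBr ez' scalerBl scale1r opprB [RHS]addrC [RHS]addrA subrK.
  by [].
have -> : e = q^-1 * (1 - q) by rewrite /q invrK; field; lra.
by rewrite -scalerA -e1 scalerA mulVf ?scale1r // gt_eqF.
Qed.
Definition epsn (n : nat) : R := (n.+1%:R)^-1.
Lemma epsn_gt0 n : 0 < epsn n. Proof. by rewrite /epsn invr_gt0. Qed.
Lemma epsn_dec n m : (n <= m)%N -> epsn m <= epsn n.
Proof. by move=> nm; rewrite /epsn lef_pV2 ?posrE // ler_nat ltnS. Qed.

Section Zseq.
Variables (z : nat -> H) (hzD : forall n, D (z n))
  (hzA : forall n, z n - T (z n) = epsn n *: (u - z n)).

Lemma z_le_fix p : D p -> T p = p -> forall n, `|z n - u| <= `|p - u|.
Proof.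
move=> Dp Tp n.
have h := monoT (hzD n) Dp.
rewrite hzA Tp subrr subr0 (ipZl hI) in h.
have h' : 0 <= ip (u - z n) (z n - p).
  by move: h; rewrite pmulr_rge0 // epsn_gt0.
move: h'; have -> : z n - p = (u - p) - (u - z n) by rewrite opprB [RHS]addrC [RHS]addrA subrK.
rewrite (ipBr hI) (ipxx hI) => h'.
have := ip_le hI (u - z n) (u - p).
rewrite (distrC (z n)) (distrC p).
move: h'; have := normr_ge0 (u - z n); have := normr_ge0 (u - p); rewrite !expr2 => ? ? ? ?.
nra.
Qed.

Lemma z_cauchy n m : (n <= m)%N ->
  `|z n - z m| ^+ 2 <= `|z m - u| ^+ 2 - `|z n - u| ^+ 2.
Proof.
move=> nm.
have h := monoT (hzD n) (hzD m).
rewrite !hzA in h.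
set a := z n - u in h *; set b := z m - u in h *.
have eab : z n - z m = a - b by rewrite /a /b opprB addrA subrK.
have ua : u - z n = - a by rewrite opprB.
have ub : u - z m = - b by rewrite opprB.
rewrite eab ua ub !scalerN (ipBl hI) !(ipNl hI) !(ipZl hI) (ipBr hI a b a) (ipBr hI a b b) (ipxx hI a) (ipxx hI b) in h.
rewrite eab (normB2 hI).
have en := epsn_dec nm; have em := epsn_gt0 m.
set X := ip a b in h *; rewrite [ip b a](ipC hI) -/X in h.
have ab2 := sqr_ge0 `|a - b|; rewrite (normB2 hI) -/X in ab2.
have [AX|XA] := leP (`|a| ^+ 2) X; first by lra.
have h2 : `|a - b| ^+ 2 <= 0 by rewrite (normB2 hI) -/X; nra.
have : a - b = 0.
  by apply/eqP; rewrite -normr_eq0 -sqrf_eq0 eq_le h2 sqr_ge0.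
move/eqP; rewrite subr_eq0 => /eqP eab'.
by move: XA; rewrite /X eab' (ipxx hI) ltxx.
Qed.

Lemma z_lim : exists zs, [/\ D zs, T zs = zs,
  (forall y, D y -> T y = y -> `|u - zs| <= `|u - y|) & z @ \oo --> zs].
Proof.
pose r n := `|z n - u| ^+ 2.
have rmono : {homo r : n m / (n <= m)%N >-> n <= m}.
  move=> n m nm; have := z_cauchy nm; have := sqr_ge0 `|z n - z m|; rewrite /r; lra.
have rub : has_ubound (range r).
  exists (`|p0 - u| ^+ 2) => _ [n _ <-].
  by apply: le_sq => //; exact: z_le_fix.
have rcv := nondecreasing_is_cvgn rmono rub.
have rle := nondecreasing_cvgn_le rmono rcv.
set l := limn r in rle.
have zcv : cvgn z.
  apply: cauchy_seq => e e0.
  have [N hN] := cvg_eps rcv (mulr_gt0 e0 e0).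
  exists N => n m Nn Nm.
  suff W : forall n m, (N <= n)%N -> (n <= m)%N -> `|z n - z m| <= e.
    have [nm|mn] := leqP n m; first exact: W.
    by rewrite distrC; apply: W => //; exact: ltnW.
  move=> n' m' Nn' nm; apply: sq_le_norm => //; first exact: ltW.
  have := z_cauchy nm; have := rle m'; have := hN n' Nn'.
  rewrite -/(r n') -/(r m') => h1 h2 h3.
  have := ler_norm (l - r n'); rewrite expr2; lra.
set zs := limn z.
have zc : z @ \oo --> zs := zcv.
have Dzs : D zs by apply: (closed_cvg D clD _ _ zc); apply: nearW.
have K0 : 0 <= `|p0 - u| by [].
have Tzs : T zs = zs.
  apply/eqP; rewrite eq_sym -subr_eq0 -normr_le0; apply: le0_of_forall => e e0.
  have e4 : 0 < e / 4 by rewrite divr_gt0.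
  have [N1 h1] := cvg_eps zc e4.
  have [N2 h2] := exists_small K0 e4.
  set n := maxn N1 N2.
  have hn1 := h1 n (leq_maxl _ _); have hn2 := h2 n (leq_maxr _ _).
  have -> : zs - T zs = (zs - z n) + (z n - T (z n)) + (T (z n) - T zs).
    by rewrite (addrA (zs - z n)) subrK addrA subrK.
  apply: le_trans (ler_normD _ _) _.
  have t1 := Tne (hzD n) Dzs; rewrite [X in _ <= X]distrC in t1.
  have : `|zs - z n + (z n - T (z n))| <= `|zs - z n| + `|z n - T (z n)| by exact: ler_normD.
  rewrite hzA normrZ gtr0_norm ?epsn_gt0 //.
  have := z_le_fix Dp0 Tp0 n; rewrite distrC => hz.
  have : epsn n * `|u - z n| <= e / 4.
    apply: le_trans hn2; rewrite mulrC /epsn; apply: ler_wpM2r => //.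
  lra.
exists zs; split => // y Dy Ty.
apply: le_of_forall => e e0.
have [N h] := cvg_eps zc e0.
have := h N (leqnn _); have := z_le_fix Dy Ty N.
rewrite (distrC (z N)) (distrC y) => ha hb.
have t := ler_normD (u - z N) (z N - zs); rewrite addrA subrK in t.
rewrite (distrC (z N) zs) in t; lra.
Qed.
End Zseq.

Lemma z_exists : exists z : nat -> H,
  forall n, D (z n) /\ z n - T (z n) = epsn n *: (u - z n).
Proof.
have h : forall n, exists y, D y /\ y - T y = epsn n *: (u - y).
  by move=> n; have [y Dy hy] := browder (epsn_gt0 n); exists y.
have [z hz] := boolp.choice h; by exists z.
Qed.

Section Xseq.
Variables (lam : nat -> R) (hl : steering lam) (x : nat -> H) (Dx0 : D (x 0%N))
  (hx : forall k, x k.+1 = lam k *: u + (1 - lam k) *: T (x k)).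

Lemma lam01 k : 0 <= lam k <= 1. Proof. by case: hl. Qed.

Lemma xD k : D (x k).
Proof.
elim: k => // k IH; rewrite hx; have /andP[l0 l1] := lam01 k.
by apply: convexP => //; exact: TD.
Qed.

Let M0 := Num.max `|x 0%N - p0| `|u - p0|.

Lemma xb k : `|x k - p0| <= M0.
Proof.
elim: k => [|k IH]; first by rewrite le_max lexx.
rewrite hx convB; have /andP[l0 l1] := lam01 k.
apply: le_trans (ler_normD _ _) _.
rewrite !normrZ !ger0_norm ?subr_ge0 //.
have t := Tne (xD k) Dp0; rewrite Tp0 in t.
have h2 : `|u - p0| <= M0 by rewrite le_max lexx orbT.
have : (1 - lam k) * `|T (x k) - p0| <= (1 - lam k) * M0.
  by apply: ler_wpM2l; [lra | exact: le_trans t IH].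
have : lam k * `|u - p0| <= lam k * M0 by exact: ler_wpM2l.
lra.
Qed.

Lemma M0_ge0 : 0 <= M0. Proof. by rewrite le_max normr_ge0. Qed.

Lemma uTx k : `|u - T (x k)| <= 2 * M0.
Proof.
have -> : u - T (x k) = (u - p0) + (p0 - T (x k)) by rewrite addrA subrK.
apply: le_trans (ler_normD _ _) _.
have t := Tne Dp0 (xD k); rewrite Tp0 (distrC p0 (x k)) in t.
have := xb k; have : `|u - p0| <= M0 by rewrite le_max lexx orbT.
lra.
Qed.

Lemma asym e : 0 < e -> exists N, forall k, (N <= k)%N -> `|x k.+1 - x k| <= e.
Proof.
move=> e0.
pose M := 2 * M0.
have M00 : 0 <= M by rewrite mulr_ge0 // M0_ge0.
apply: (@xu R (fun k => `|x k.+1 - x k|) (fun k => lam k.+1) (fun _ => 0)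
  (fun k => M * `|lam k.+1 - lam k|)) => //.
- by move=> k; exact: lam01.
- by move=> k; rewrite mulr_ge0.
- move=> N B; have [h1 h2 h3 h4] := hl.
  have [K hK] := div_tail 1 h3 N B; exists K => k /hK h.
  apply: le_trans h _; rewrite le_eqVlt; apply/orP; left; apply/eqP.
  by apply: eq_bigr => j _; rewrite addn1.
- move=> e1 e10; have [h1 h2 h3 h4] := hl.
  have e2 : 0 < e1 / (M + 1) by rewrite divr_gt0 //; lra.
  have [N hN] := tail_small (fun j => normr_ge0 _) h4 e2.
  exists N => N' K NN' N'K; rewrite -mulr_sumr.
  have := hN N' K NN' N'K; set S := \sum_(_ <= _ < _) _ => hS.
  have S0 : 0 <= S by apply: sumr_ge0.
  have : S * (M + 1) <= e1 by rewrite -ler_pdivlMr //; lra.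
  nra.
- by move=> e1 e10; exists 0%N => k _; exact: ltW.
- move=> k; rewrite mulr0 addr0 !hx convD.
  apply: le_trans (ler_normD _ _) _.
  rewrite !normrZ; have /andP[l0 l1] := lam01 k.+1.
  have l1' : 0 <= 1 - lam k.+1 by lra.
  rewrite (ger0_norm l1') -!hx.
  have t := Tne (xD k.+1) (xD k).
  have := uTx k; have := normr_ge0 (lam k.+1 - lam k).
  set d := `|lam k.+1 - lam k|.
  move=> ? ?.
  have : d * `|u - T (x k)| <= M * d by rewrite mulrC; apply: ler_wpM2r.
  have : (1 - lam k.+1) * `|T (x k.+1) - T (x k)| <= (1 - lam k.+1) * `|x k.+1 - x k|.
    by apply: ler_wpM2l => //; lra.
  lra.
Qed.

Lemma Ax_small e : 0 < e -> exists N, forall k, (N <= k)%N -> `|x k - T (x k)| <= e.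
Proof.
move=> e0.
have e2 : 0 < e / 2 by rewrite divr_gt0.
have [N1 h1] := asym e2.
have [h1' h2' h3' h4'] := hl.
have eM : 0 < e / 2 / (2 * M0 + 1) by rewrite divr_gt0 //; have := M0_ge0; lra.
have [N2 h2] := cvg_eps h2' eM.
exists (maxn N1 N2) => k hk.
have k1 := h1 k (leq_trans (leq_maxl _ _) hk).
have k2 := h2 k (leq_trans (leq_maxr _ _) hk).
rewrite sub0r normrN in k2.
have -> : x k - T (x k) = (x k - x k.+1) + (x k.+1 - T (x k)) by rewrite addrA subrK.
apply: le_trans (ler_normD _ _) _.
rewrite (distrC (x k)) [in X in _ + X]hx convB subrr scaler0 addr0 normrZ.
have /andP[l0 l1] := lam01 k.
rewrite ger0_norm //.
have := uTx k; have := M0_ge0 => ? ?.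
rewrite ger0_norm // in k2.
have : lam k * (2 * M0 + 1) <= e / 2 by rewrite -ler_pdivlMr //; lra.
nra.
Qed.

Section Final.
Variables (z : nat -> H)
  (hz : forall n, D (z n) /\ z n - T (z n) = epsn n *: (u - z n))
  (zs : H) (Dzs : D zs) (Tzs : T zs = zs) (zc : z @ \oo --> zs).

Let hzD n := (hz n).1.
Let hzA n := (hz n).2.

Lemma limsup e : 0 < e -> exists N, forall k, (N <= k)%N -> ip (u - zs) (x k - zs) <= e.
Proof.
move=> e0.
have [K1 eK1] : exists K1, K1 = `|u - p0| by eexists.
have [Kb eKb] : exists Kb, Kb = M0 + 2 * K1 by eexists.
have K10 : 0 <= K1 by rewrite eK1.
have M00 := M0_ge0.
have Kb0 : 0 <= Kb by rewrite eKb; lra.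
have hzu n : `|u - z n| <= K1.
  by rewrite eK1 (distrC u (z n)) (distrC u p0); exact: (z_le_fix hzD hzA Dp0 Tp0 n).
have hxz k n : `|x k - z n| <= Kb.
  have -> : x k - z n = (x k - p0) + (p0 - u) + (u - z n).
    by rewrite (addrA (x k - p0)) subrK addrA subrK.
  apply: le_trans (ler_normD _ _) _; have := ler_normD (x k - p0) (p0 - u).
  have := xb k; have := hzu n; rewrite (distrC p0) -eK1 eKb; lra.
have dd0 : 0 < e / (2 * (K1 + Kb + 1)) by rewrite divr_gt0 //; lra.
have [N1 h1] := cvg_eps zc dd0.
have [N1' h1'] := cvg_eps zc ltr01.
have hn1 := h1 (maxn N1 N1') (leq_maxl _ _); have hn1' := h1' (maxn N1 N1') (leq_maxr _ _).
move: (maxn N1 N1') hn1 hn1' => n hn1 hn1'.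
rewrite distrC in hn1; rewrite distrC in hn1'.
have epn := epsn_gt0 n.
have e'0 : 0 < epsn n * e / (2 * (Kb + 1)) by rewrite divr_gt0 ?mulr_gt0 //; lra.
have [N hN] := Ax_small e'0.
exists N => k Nk.
have -> : u - zs = (u - z n) + (z n - zs) by rewrite addrA subrK.
have -> : x k - zs = (x k - z n) + (z n - zs) by rewrite addrA subrK.
have ha := hzu n; have hb := hxz k n.
have hab : ip (u - z n) (x k - z n) <= e / 2.
  have h := monoT (hzD n) (xD k).
  rewrite hzA (_ : z n - x k = - (x k - z n)) in h; last by rewrite opprB.
  rewrite (ipBl hI) (ipZl hI) !(ipNr hI) in h.
  have c1 := ip_le hI (x k - T (x k)) (x k - z n).
  have c2 := hN k Nk.
  have c3 : `|x k - T (x k)| * `|x k - z n| <= epsn n * e / (2 * (Kb + 1)) * Kb.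
    by apply: ler_pM => //.
  have c4 : epsn n * e / (2 * (Kb + 1)) * Kb <= epsn n * (e / 2).
    have -> : epsn n * e / (2 * (Kb + 1)) * Kb = (epsn n * (e / 2)) * (Kb / (Kb + 1)).
      by field; lra.
    rewrite -[X in _ <= X]mulr1; apply: ler_wpM2l.
    - by rewrite mulr_ge0 // ?divr_ge0 //; [exact: ltW | lra].
    - by rewrite ler_pdivrMr ?mul1r; lra.
  have : epsn n * ip (u - z n) (x k - z n) <= epsn n * (e / 2) by lra.
  by rewrite ler_pM2l.
move: (u - z n) (x k - z n) (z n - zs) hab ha hb hn1 hn1' => a b ee hab ha hb hn1 hn1'.
rewrite (ipDl hI) !(ipDr hI) (ipxx hI ee).
have t1 := ip_le hI a ee; have t2 := ip_le hI ee b.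
have hee : `|ee| ^+ 2 <= `|ee| by rewrite expr2 ler_piMl.
have : `|ee| * (K1 + Kb + 1) <= e / 2.
  rewrite -ler_pdivlMr; last lra.
  apply: le_trans hn1 _; rewrite le_eqVlt; apply/orP; left; apply/eqP.
  by field; lra.
have : `|a| * `|ee| <= K1 * `|ee| by apply: ler_wpM2r.
have : `|ee| * `|b| <= `|ee| * Kb by apply: ler_wpM2l.
lra.
Qed.

Lemma xconv : x @ \oo --> zs.
Proof.
apply: eps_cvg => e e0.
have [h1 h2 h3 h4] := hl.
have e2 : 0 < e * e by rewrite mulr_gt0.
have hdiv : forall N B, exists K, forall k, (K <= k)%N -> B <= \sum_(N <= j < k) lam j.
  move=> N B; have [K hK] := div_tail 0 h3 N B; exists K => k /hK.
  by under eq_bigr do rewrite addn0.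
have hbeta : forall e1, 0 < e1 -> exists N, forall N' K, (N <= N')%N -> (N' <= K)%N ->
    \sum_(N' <= j < K) (0 : R) <= e1.
  move=> e1 e10; exists 0%N => N' K _ _.
  by rewrite big1 //; exact: ltW.
have hd : forall e1, 0 < e1 -> exists N, forall k, (N <= k)%N ->
    2 * ip (u - zs) (x k.+1 - zs) <= e1.
  move=> e1 e10; have e3 : 0 < e1 / 2 by rewrite divr_gt0.
  have [N hN] := limsup e3; exists N => k Nk.
  have := hN k.+1 (leq_trans Nk (leqnSn _)); rewrite ler_pdivlMr //; lra.
have hrec : forall k, `|x k.+1 - zs| ^+ 2 <= (1 - lam k) * `|x k - zs| ^+ 2 +
    lam k * (2 * ip (u - zs) (x k.+1 - zs)) + 0.
  move=> k; rewrite addr0.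
  have /andP[l0 l1] := lam01 k.
  have t := Tne (xD k) Dzs; rewrite Tzs in t.
  have t2 := le_sq (normr_ge0 _) t.
  rewrite hx convB.
  move: (u - zs) (T (x k) - zs) t2 => a v t2.
  rewrite (normD2 hI) !(ipDr hI) !(ipZl hI) !(ipZr hI) !normrZ !ger0_norm //; last lra.
  rewrite !exprMn (ipxx hI a).
  have := sqr_ge0 `|a|; have := sqr_ge0 `|v|.
  have := sqr_ge0 `|x k - zs|.
  set A := `|a| ^+ 2; set V := `|v| ^+ 2 in t2 *; set E := `|x k - zs| ^+ 2 in t2 *.
  set Q := ip a v.
  clearbody A V E Q.
  move=> E0 V0 A0.
  have g1 : (1 - lam k) ^+ 2 * V <= (1 - lam k) * E.
    rewrite expr2 -mulrA; apply: ler_wpM2l; first lra.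
    by apply: le_trans (_ : V <= E) => //; rewrite ler_piMl //; lra.
  have g2 : 0 <= lam k ^+ 2 * A by rewrite mulr_ge0 // sqr_ge0.
  rewrite !expr2 in g1 g2 *; nra.
have [N hN] := @xu R (fun k => `|x k - zs| ^+ 2) lam
  (fun k => 2 * ip (u - zs) (x k.+1 - zs)) (fun _ => 0) lam01 (fun _ => lexx 0)
  hdiv hbeta hd hrec _ e2.
exists N => k /hN h; rewrite distrC; apply: sq_le_norm;
  [exact: normr_ge0 | exact: ltW | by rewrite expr2].
Qed.

End Final.

Theorem halpern_main : exists p, [/\ D p, T p = p,
  (forall y, D y -> T y = y -> `|u - p| <= `|u - y|) & x @ \oo --> p].
Proof.
have [z hz] := z_exists.
have [zs [Dzs Tzs hmin zc]] := z_lim (fun n => (hz n).1) (fun n => (hz n).2).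
exists zs; split => //.
exact: (xconv hz Dzs Tzs zc).
Qed.

End Xseq.
End Halpern.
Unset Implicit Arguments.
Theorem theorem7 (R : realType) (H : completeNormedModType R)
  (ip : H -> H -> R) (D : set H) (m : nat) (C : 'I_m -> set H)
  (P : 'I_m -> H -> H) (Omega : {fset (seq 'I_m)}) (w : seq 'I_m -> R)
  (lam : nat -> R) (u x0 : H) (x : nat -> H) :
  hilbert_inner ip ->
  D !=set0 -> closed D -> convex_set D ->
  (forall i, closed (C i) /\ convex_set (C i) /\ C i `<=` D) ->
  \bigcap_(i in [set: 'I_m]) C i !=set0 ->
  (forall i y, D y -> is_metric_proj (C i) y (P i y)) ->
  in_M Omega w ->
  steering lam ->
  D u -> D x0 ->
  x 0%N = x0 ->
  (forall k, x k.+1 = lam k *: u + (1 - lam k) *: \sum_(t <- Omega) w t *: Pt P t (x k)) ->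
  exists p : H, is_metric_proj (\bigcap_(i in [set: 'I_m]) C i) u p /\ x @ \oo --> p.
Proof.
move=> hI nD clD cD hC [p0 hp0] hP [[hiv hfit] hw hs] hl Du Dx0 ex0 hx.
have hw' : forall t, t \in (Omega : seq _) -> 0 < w t.
  by move=> t ts; have /andP[] := hw t ts.
have Cp0 : forall i, C i p0 by move=> i; exact: hp0.
have [i0 _] : exists i : 'I_m, True.
  move: hs; case E: (Omega : seq _) => [|t s]; first by rewrite big_nil => /eqP; rewrite eq_sym oner_eq0.
  have : t \in Omega by rewrite -[t \in Omega]/(t \in (Omega : seq _)) E inE eqxx.
  move/hiv; rewrite /index_vector; case: t {E} => // i t' _ _; by exists i.
have Dp0 : D p0 by apply: (hC i0).2.2; exact: Cp0.
have hfit' : forall i : 'I_m, exists2 t, t \in (Omega : seq _) & i \in t.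
  by move=> i; have [t ts it] := hfit i; exists t.
pose T := Tm P Omega w.
have TD : forall y, D y -> D (T y) by move=> y Dy; exact: (T_D hC hP hw' hs cD nD Dy).
have Tne : forall a b, D a -> D b -> `|T a - T b| <= `|a - b|.
  by move=> a b Da Db; exact: (T_nonexp hI hC hP hw' hs Da Db).
have Tp0 : T p0 = p0 by exact: (T_of_C hC hP hs Cp0).
have hx' : forall k, x k.+1 = lam k *: u + (1 - lam k) *: T (x k) by exact: hx.
have Dx0' : D (x 0%N) by rewrite ex0.
have [zs [Dzs Tzs hmin xc]] := halpern_main hI cD clD TD Tne Dp0 Tp0 Du hl Dx0' hx'.
exists zs; split => //; split.
  move=> i _; apply: (T_fix hI hC hP hw' hs hfit' (ex_intro _ p0 Cp0) Dzs Tzs).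
move=> y hy; have Cy : forall i, C i y by move=> i; exact: hy.
apply: hmin; first by apply: (hC i0).2.2; exact: Cy.
exact: (T_of_C hC hP hs Cy).
Qed.
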